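(* Let $\mathcal E$ be a nest on a complex Banach space $X$ and let $\mathcal J$ be a $\mathcal T(\mathcal E)$-bimodule with essential support function $\Phi^e_{\mathcal J}$. Let $L,N\in\mathcal E$ be such that $L_-\subsetneq\Phi^e_{\mathcal J}(N)$. Then for every $f\in(N_-)^\perp$ and every $x\in L$, the operator $f\otimes x$ lies in $\mathcal J$.
   Context: A nest $\mathcal E$ on $X$ is a family of closed linear subspaces of $X$, totally ordered by inclusion, containing $\{0\}$ and $X$, closed under arbitrary meets $\wedge$ (intersections) and joins $\vee$ (norm-closed linear spans of unions). For $E\in\mathcal E$, $E_-=\vee\{F\in\mathcal E: F\subsetneq E\}$. $\mathcal T(\mathcal E)=\{T\in\mathcal B(X): TE\subseteq E\ \forall E\in\mathcal E\}$. A $\mathcal T(\mathcal E)$-bimodule is a linear subspace $\mathcal J\subseteq\mathcal B(X)$ with $\mathcal T(\mathcal E)\mathcal J\subseteq\mathcal J$ and $\mathcal J\mathcal T(\mathcal E)\subseteq\mathcal J$. For linear subspaces $M,L$ of $X$ with $L$ closed, $M/L$ denotes $\{m+L: m\in M\}\subseteq X/L$ and $\dim(M/L)$ its (algebraic) dimension. The essential support function of $\mathcal J$ is $\Phi^e_{\mathcal J}(N)=\wedge\{L\in\mathcal E: \dim(TN/L)<\infty\ \forall T\in\mathcal J\}$ for $N\in\mathcal E$. For $S\subseteq X$, $S^\perp=\{f\in X^*: f(S)=\{0\}\}$; $f\otimes x$ is the operator $y\mapsto f(y)x$. *)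

(* Defs.v *)
From HB Require Import structures.
From mathcomp Require Import all_boot all_order all_algebra.
From mathcomp Require Import complex.
From mathcomp Require Import all_classical all_reals all_analysis.
Set Implicit Arguments. Unset Strict Implicit. Unset Printing Implicit Defensive.
Import Order.TTheory GRing.Theory Num.Theory.
Import numFieldNormedType.Exports.
Local Open Scope classical_set_scope.
Local Open Scope ring_scope.

(* Complex Banach space: X : completeNormedModType (R[i]) for R : realType. *)
Section Nests.
Context {K : numFieldType} {X : normedModType K}.

Definition subspace (M : set X) : Prop :=
  M 0 /\ (forall (a : K) (u v : X), M u -> M v -> M (a *: u + v)).

Definition csubspace (M : set X) : Prop := subspace M /\ closed M.

Definition cspan (S : set X) : set X :=
  \bigcap_(M in [set M : set X | csubspace M /\ S `<=` M]) M.

Definition fam_meet (F : set (set X)) : set X := \bigcap_(M in F) M.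
Definition fam_join (F : set (set X)) : set X := cspan (\bigcup_(M in F) M).

Definition is_nest (E : set (set X)) : Prop :=
  [/\ (forall M, E M -> csubspace M),
      (forall M1 M2, E M1 -> E M2 -> M1 `<=` M2 \/ M2 `<=` M1),
      E [set 0] /\ E setT,
      (forall F, F `<=` E -> E (fam_meet F)) &
      (forall F, F `<=` E -> E (fam_join F))].

Definition nest_minus (E : set (set X)) (M : set X) : set X :=
  fam_join [set F | E F /\ F `<` M].

(* bounded (= continuous) linear operators on X *)
Definition is_linear_map (T : X -> X) : Prop :=
  forall (a : K) (u v : X), T (a *: u + v) = a *: T u + T v.
Definition bounded_op (T : X -> X) : Prop := is_linear_map T /\ continuous T.

Definition dual_elt (f : X -> K) : Prop :=
  (forall (a : K) (u v : X), f (a *: u + v) = a * f u + f v) /\ continuous f.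

Definition annihilator (S : set X) : set (X -> K) :=
  [set f | dual_elt f /\ forall y, S y -> f y = 0].

Definition rank_one (f : X -> K) (x : X) : X -> X := fun y => f y *: x.

Definition nest_alg (E : set (set X)) : set (X -> X) :=
  [set T | bounded_op T /\ forall M, E M -> forall y, M y -> M (T y)].

Definition is_bimodule (E : set (set X)) (J : set (X -> X)) : Prop :=
  [/\ J `<=` bounded_op,
      J (fun _ => 0),
      (forall (a : K) (S1 S2 : X -> X), J S1 -> J S2 ->
         J (fun y => a *: S1 y + S2 y)),
      (forall T S, nest_alg E T -> J S -> J (T \o S)) &
      (forall T S, nest_alg E T -> J S -> J (S \o T))].

(* dim (M / L) < oo (algebraic dimension of {m + L : m in M} in X/L):
   M/L is spanned by the classes of finitely many vectors *)
Definition fin_dim_quot (M L : set X) : Prop :=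
  exists s : seq X, forall y, M y ->
    exists c : 'I_(size s) -> K, L (y - \sum_(i < size s) c i *: s`_i).

Definition ess_support (E : set (set X)) (J : set (X -> X)) (N : set X) : set X :=
  fam_meet [set L | E L /\ forall T, J T -> fin_dim_quot (T @` N) L].

End Nests.

(* Main.v *)
Set Warnings "-all".
Require Import Defs.
From HB Require Import structures.
From mathcomp Require Import all_boot all_order all_algebra.
From mathcomp Require Import complex.
From mathcomp Require Import all_classical all_reals all_analysis.
From mathcomp Require Import ring lra.
Import Order.TTheory GRing.Theory Num.Theory.
Import numFieldNormedType.Exports.
Local Open Scope classical_set_scope.
Local Open Scope ring_scope.
Local Open Scope complex_scope.
Section S.
Variables (R : realType) (X : completeNormedModType R[i]).
Lemma normcR (t : R) : `|t%:C| = `|t|%:C.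
Proof. by rewrite normc_def /= expr0n /= addr0 sqrtr_sqr. Qed.
Definition nr (x : X) : R := complex.Re `|x|.
Lemma normE (x : X) : `|x| = (nr x)%:C.
Proof.
rewrite /nr; have := ger0_Im (normr_ge0 x). case: (`|x|) => a b /= ->. by [].
Qed.
Lemma nr_ge0 x : 0 <= nr x.
Proof. by rewrite -ler0c -normE. Qed.
Lemma nrD x y : nr (x + y) <= nr x + nr y.
Proof. by rewrite -lecR rmorphD /= -!normE ler_normD. Qed.
Lemma nrZ (t : R) x : nr (t%:C *: x) = `|t| * nr x.
Proof.
apply/eqP; rewrite -(inj_eq (@complexI _)) rmorphM /= -normE normrZ normE normcR.
by [].
Qed.
Lemma nrN x : nr (- x) = nr x.
Proof. by rewrite /nr normrN. Qed.
Lemma nri x : nr ('i *: x) = nr x.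
Proof. by rewrite /nr normrZ normc_def /= expr0n /= add0r expr1n sqrtr1 mul1r. Qed.

Section HBsec.
Variables (M : set X) (z : X) (d : R).
Hypotheses (HM : Defs.subspace M) (Hz : ~ M z) (d0 : 0 < d)
  (Hd : forall m, M m -> d <= nr (z - m)).

Lemma M0 : M 0. Proof. by move: HM; rewrite /Defs.subspace => -[]. Qed.
Lemma ML a u v : M u -> M v -> M (a *: u + v). Proof. by move: HM; rewrite /Defs.subspace => -[_]; apply. Qed.
Lemma MZ a u : M u -> M (a *: u). Proof. by move=> Mu; rewrite -[_ *: _]addr0; apply: ML => //; apply: M0. Qed.
Lemma MD u v : M u -> M v -> M (u + v). Proof. by move=> Mu Mv; rewrite -[u]scale1r; apply: ML. Qed.
Lemma MN u : M u -> M (- u). Proof. by move=> Mu; rewrite -scaleN1r; apply: MZ. Qed.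

Definition Q (G : set (X * R)) :=
  [/\ (forall x s t, G (x, s) -> G (x, t) -> s = t),
      (forall x s y t (r : R), G (x, s) -> G (y, t) -> G (r%:C *: x + y, r * s + t)) &
      (forall x s, G (x, s) -> d * s <= nr x)].

Definition G0 : set (X * R) := [set p | exists m t, M m /\ p = (m + t%:C *: z, t)].

Lemma QG0 : Q G0.
Proof.
split.
- move=> x s t [m1 [t1 [Mm1 [-> ->]]]] [m2 [t2 [Mm2 []]]] e ->.
  apply/eqP; apply/negPn/negP => ne.
  apply: Hz.
  have -> : z = ((t1 - t2)^-1)%:C *: (m2 - m1).
    have : (t1 - t2)%:C *: z = m2 - m1.
      by rewrite rmorphB /= scalerBl; apply/eqP; rewrite subr_eq addrAC eq_sym subr_eq -e addrC.
    move=> <-; rewrite scalerA -rmorphM /= mulVf ?scale1r // subr_eq0.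
    by [].
  by apply: MZ; apply: MD => //; apply: MN.
- move=> x s y t r [m1 [t1 [Mm1 [-> ->]]]] [m2 [t2 [Mm2 [-> ->]]]].
  exists (r%:C *: m1 + m2), (r * t1 + t2); split; first by apply: ML.
  congr (_, _); rewrite rmorphD rmorphM /= scalerDl scalerDr -scalerA.
  by rewrite addrACA.
- move=> x s [m [t [Mm [-> ->]]]].
  have [t0|t0] := leP t 0.
    by apply: le_trans (nr_ge0 _); rewrite pmulr_rle0.
  have -> : m + t%:C *: z = t%:C *: (z - ((- t^-1)%:C *: m)).
    rewrite scalerDr scalerN scalerA -rmorphM /= mulrN mulfV ?gt_eqF // rmorphN rmorph1 scaleN1r opprK.
    by rewrite addrC.
  rewrite nrZ gtr0_norm // mulrC.
  apply: ler_wpM2l; first exact: ltW. apply: Hd; exact: MZ.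
Qed.

Lemma Q_pairs (U : set (X * R)) :
  (forall p1 p2, U p1 -> U p2 -> exists H, [/\ Q H, H `<=` U, H p1 & H p2]) -> Q U.
Proof.
move=> HU; split.
- move=> x s t h1 h2; have [H [[f _ _] _ H1 H2]] := HU _ _ h1 h2; exact: f H1 H2.
- move=> x s y t r h1 h2; have [H [[_ l _] sub H1 H2]] := HU _ _ h1 h2.
  by apply: sub; apply: l.
- move=> x s h1; have [H [[_ _ b] _ H1 _]] := HU _ _ h1 h1; exact: b.
Qed.

Definition P (A : set (X * R)) := Q (G0 `|` A).

Lemma chainP (F : set (set (X * R))) : F `<=` P -> total_on F subset ->
  P (\bigcup_(A in F) A).
Proof.
move=> FP tot; apply: Q_pairs => p1 p2 h1 h2.
have sub1 A : F A -> G0 `|` A `<=` G0 `|` \bigcup_(A in F) A.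
  move=> FA p. case. by left. by right; exists A.
case: h1 => [g1|[A1 FA1 a1]]; case: h2 => [g2|[A2 FA2 a2]].
- by exists G0; split; [exact: QG0|move=> p gp; left| |].
- by exists (G0 `|` A2); split; [exact: FP|exact: sub1|left|right].
- by exists (G0 `|` A1); split; [exact: FP|exact: sub1|right|left].
- have [s12|s21] := tot _ _ FA1 FA2.
  + by exists (G0 `|` A2); split; [exact: FP|exact: sub1|right; exact: s12|right].
  + by exists (G0 `|` A1); split; [exact: FP|exact: sub1|right|right; exact: s21].
Qed.


Lemma sc_inv (r : R) (w v : X) : r != 0 ->
  r%:C *: ((r^-1)%:C *: w + v) = w + r%:C *: v.
Proof. by move=> r0; rewrite scalerDr scalerA -rmorphM /= mulfV // scale1r. Qed.

Lemma ext_step (A : set (X * R)) : P A -> forall y, ~ (exists s, (G0 `|` A) (y, s)) ->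
  exists B, A `<` B /\ P B.
Proof.
move=> QD y ny; set D := G0 `|` A in QD ny.
have [Df Dl Db] := QD.
have D00 : D (0, 0).
  by left; exists 0, 0; split; [exact: M0|rewrite rmorph0 scale0r addr0].
have DZ x s (r : R) : D (x, s) -> D (r%:C *: x, r * s).
  by move=> h; have := Dl _ _ _ _ r h D00; rewrite !addr0.
have key x1 s1 x2 s2 : D (x1, s1) -> D (x2, s2) ->
    d * s1 - nr (x1 - y) <= nr (x2 + y) - d * s2.
  move=> h1 h2; have := Db _ _ (Dl _ _ _ _ 1 h1 h2); rewrite scale1r mul1r => h.
  have := nrD (x1 - y) (x2 + y).
  have -> : x1 - y + (x2 + y) = x1 + x2 by rewrite addrACA addNr addr0.
  move=> h'.
  lra.
pose S := [set v | exists x s, D (x, s) /\ v = d * s - nr (x - y)].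
have hS : has_sup S.
  split; first by exists (d * 0 - nr (0 - y)), 0, 0.
  exists (nr (0 + y) - d * 0) => _ [x [s [h ->]]]; exact: key h D00.
pose b := sup S.
have bge x s : D (x, s) -> d * s - nr (x - y) <= b.
  by move=> h; apply: sup_upper_bound => //; exists x, s.
have ble x s : D (x, s) -> b <= nr (x + y) - d * s.
  move=> h; apply: ge_sup; first by case: hS.
  by move=> _ [x1 [s1 [h1 ->]]]; exact: key h1 h.
pose a := b / d.
pose Ext := [set p | exists x s (r : R), D (x, s) /\ p = (x + r%:C *: y, s + r * a)].
have QE : Q Ext.
  split.
  - move=> x s t [x1 [s1 [r1 [h1 [-> ->]]]]] [x2 [s2 [r2 [h2 []]]]] e ->.
    have [er|ner] := eqVneq r1 r2.
      move: e; rewrite er => /addIr ex; rewrite ex in h1.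
      by rewrite (Df _ _ _ h1 h2).
    exfalso; apply: ny.
    have hx := Dl _ _ _ _ (-1) h1 h2.
    have := DZ _ _ ((r1 - r2)^-1) hx.
    have -> : (-1)%:C *: x1 + x2 = (r1 - r2)%:C *: y.
      have -> : x2 = x1 + r1%:C *: y - r2%:C *: y by rewrite e addrK.
      rewrite rmorphN rmorph1 scaleN1r rmorphB /= scalerBl.
      by rewrite addrA addKr.
    rewrite scalerA -rmorphM /= mulVf ?scale1r ?subr_eq0 //.
    by move=> h; eexists; exact: h.
  - move=> x s w t r [x1 [s1 [r1 [h1 [-> ->]]]]] [x2 [s2 [r2 [h2 [-> ->]]]]].
    exists (r%:C *: x1 + x2), (r * s1 + s2), (r * r1 + r2); split; first exact: Dl.
    congr (_, _); last by ring.
    rewrite rmorphD rmorphM /= scalerDl scalerDr -scalerA.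
    by rewrite addrACA.
  - move=> x s [x1 [s1 [r [h1 [-> ->]]]]].
    have dd : d != 0 by rewrite gt_eqF.
    have ea : d * (s1 + r * a) = d * s1 + r * b by rewrite /a; field.
    rewrite ea.
    have [rn|r0|r0] := ltgtP r 0; last first.
    + by rewrite r0 mul0r addr0 rmorph0 scale0r addr0; exact: Db.
    + set w := (r^-1)%:C *: x1 + y.
      have hw : D ((r^-1)%:C *: x1, r^-1 * s1) by exact: DZ.
      have := ble _ _ hw; rewrite -/w => hb.
      have rn0 : r != 0 by rewrite gt_eqF.
      rewrite -(sc_inv _ _ _ rn0) nrZ gtr0_norm // -/w.
      have : r * b <= r * (nr w - d * (r^-1 * s1)) by apply: ler_wpM2l => //; exact: ltW.
      have -> : r * (nr w - d * (r^-1 * s1)) = r * nr w - d * s1.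
        by field; rewrite gt_eqF.
      lra.
    + pose q := - r.
      have q0 : 0 < q by rewrite /q oppr_gt0.
      set w := (q^-1)%:C *: x1 - y.
      have hw : D ((q^-1)%:C *: x1, q^-1 * s1) by exact: DZ.
      have := bge _ _ hw; rewrite -/w => hb.
      have -> : x1 + r%:C *: y = q%:C *: w.
        rewrite /w -scaleN1r sc_inv ?gt_eqF // scaleN1r scalerN -scaleNr /q -rmorphN opprK.
        by [].
      rewrite nrZ gtr0_norm //.
      have : q * (d * (q^-1 * s1) - nr w) <= q * b by apply: ler_wpM2l => //; exact: ltW.
      have -> : q * (d * (q^-1 * s1) - nr w) = d * s1 - q * nr w.
        by field; rewrite gt_eqF.
      rewrite /q; lra.
have DE : D `<=` Ext.
  move=> p g; exists p.1, p.2, 0; split; first by case: p g.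
  by rewrite rmorph0 scale0r addr0 mul0r addr0; case: p g.
exists (A `|` Ext); split.
  split; first by move=> p h; left.
  move=> sub; apply: ny; exists a.
  have : Ext (y, a).
    exists 0, 0, 1; split => //.
    by rewrite add0r scale1r add0r mul1r.
  move=> /(fun h => sub _ (or_intror h)) h; by right.
rewrite /P; have -> : G0 `|` (A `|` Ext) = Ext.
  apply/seteqP; split=> p; last by move=> h; right; right.
  case=> [g|[a1|//]]; apply: DE; [left|right] => //.
exact: QE.
Qed.


Lemma HB_real : exists phi : X -> R,
  [/\ (forall (r : R) x y, phi (r%:C *: x + y) = r * phi x + phi y),
      (forall x, d * phi x <= nr x),
      (forall m, M m -> phi m = 0) & phi z = 1].
Proof.
have [A [PA maxA]] := Zorn_bigcup chainP.
have tot : forall y, exists s, (G0 `|` A) (y, s).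
  move=> y; apply: contrapT => ny.
  have [B [AB PB]] := @ext_step A PA y ny.
  exact: maxA AB PB.
have [phi hphi] := choice tot.
have [Df Dl Db] := PA.
have G0D x s : G0 (x, s) -> phi x = s.
  by move=> h; apply: (Df _ _ _ (hphi x)); left.
exists phi; split.
- move=> r x y; apply: Df (hphi _) _; exact: Dl.
- move=> x; exact: Db.
- move=> m Mm; apply: G0D; exists m, 0; split => //.
  by rewrite rmorph0 scale0r addr0.
- apply: G0D; exists 0, 1; split; first exact: M0.
  by rewrite rmorph1 scale1r add0r.
Qed.

End HBsec.

Section Cplx.
Variable phi : X -> R.
Hypothesis phiL : forall (r : R) x y, phi (r%:C *: x + y) = r * phi x + phi y.

Lemma phiD x y : phi (x + y) = phi x + phi y.
Proof. by have := phiL 1 x y; rewrite rmorph1 scale1r mul1r. Qed.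
Lemma phiZ (r : R) x : phi (r%:C *: x) = r * phi x.
Proof.
have p0 : phi 0 = 0.
  have h := phiD 0 0; rewrite addr0 in h.
  by apply: (addrI (phi 0)); rewrite addr0 -h.
by rewrite -[_ *: _]addr0 phiL p0 addr0.
Qed.

Lemma scaleC (a1 a2 : R) (u : X) :
  (a1 +i* a2) *: u = a1%:C *: u + a2%:C *: ('i *: u).
Proof.
rewrite scalerA -scalerDl; congr (_ *: u).
by apply/eqP; rewrite eq_complex /=; apply/andP; split; apply/eqP; ring.
Qed.

Lemma scaleiC (a1 a2 : R) (u : X) :
  'i *: ((a1 +i* a2) *: u) = a1%:C *: ('i *: u) + (- a2)%:C *: u.
Proof.
rewrite !scalerA -scalerDl; congr (_ *: u).
by apply/eqP; rewrite eq_complex /=; apply/andP; split; apply/eqP; ring.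
Qed.

Definition gC (x : X) : R[i] := (phi x)%:C - 'i * (phi ('i *: x))%:C.

Lemma gC_lin (a : R[i]) (u v : X) : gC (a *: u + v) = a * gC u + gC v.
Proof.
case: a => a1 a2.
rewrite /gC scalerDr !phiD scaleiC scaleC !phiD !phiZ.
by apply/eqP; rewrite eq_complex /=; apply/andP; split; apply/eqP; ring.
Qed.


Lemma normci : `|'i : R[i]| = 1.
Proof. by rewrite normc_def /= expr0n /= add0r expr1n sqrtr1. Qed.

Variable d : R.
Hypotheses (d0 : 0 < d) (phiB : forall x, d * phi x <= nr x).

Lemma phi_abs x : `|phi x| <= nr x / d.
Proof.
rewrite ler_pdivlMr // mulrC; have [h|h] := leP 0 (phi x).
  by rewrite ger0_norm //.
have hN : phi (- x) = - phi x by have := phiZ (-1) x; rewrite rmorphN1 scaleN1r mulN1r.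
by rewrite ltr0_norm // -hN -(nrN x); apply: phiB.
Qed.

Lemma gC_bound w : `|gC w| <= (2 / d * nr w)%:C.
Proof.
rewrite /gC; apply: le_trans (ler_normB _ _) _.
rewrite normrM normci mul1r !normcR -rmorphD lecR.
have := phi_abs w; have := phi_abs ('i *: w); rewrite nri.
have -> : 2 / d * nr w = nr w / d + nr w / d by field; rewrite gt_eqF.
move=> h1 h2; exact: lerD.
Qed.

Lemma gC_dual : Defs.dual_elt (K := R[i]) (X := X) gC.
Proof.
split; first exact: gC_lin.
have k0 : 0 < (2 / d)%:C :> R[i].
  have h : (0:R)%:C < (2 / d)%:C by rewrite ltcR divr_gt0.
  by rewrite -(rmorph0 (real_complex R)).
move=> x; apply/cvgrPdist_lt => e e0; near=> y.
have -> : gC x - gC y = gC (x - y).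
  have h := gC_lin (-1) y x; rewrite scaleN1r mulN1r in h.
  by rewrite addrC -h addrC.
apply: le_lt_trans (gC_bound _) _.
rewrite rmorphM /= -normE -ltr_pdivlMl //.
near: y; apply: cvgr_dist_lt; first exact: cvg_id.
by rewrite mulr_gt0 ?invr_gt0.
Unshelve. all: by end_near.
Qed.

End Cplx.

Lemma sep (M : set X) (z : X) : Defs.csubspace M -> ~ M z ->
  exists g : X -> R[i], Defs.dual_elt (K := R[i]) (X := X) g /\
    (forall m, M m -> g m = 0) /\ g z != 0.
Proof.
case=> HM cM Hz.
have : nbhs z (~` M) by have := closed_openC cM; rewrite openE => /(_ z); apply.
case/nbhs_ballP => e e0 be.
have eim : complex.Im e = 0 by apply: ger0_Im; exact: ltW.
set d := complex.Re e.
have eE : e = d%:C by rewrite /d; case: (e) eim => a b /= ->.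
have d0 : 0 < d by rewrite -ltcR -eE.
have Hd m : M m -> d <= nr (z - m).
  move=> Mm; rewrite leNgt; apply/negP => lt; apply: (be m) => //.
  by rewrite -ball_normE /ball_ /= normE eE ltcR.
have [phi [phiL phiB phiM phiz]] := @HB_real M z d HM Hz d0 Hd.
exists (gC phi); split; first exact: (@gC_dual phi phiL d d0 phiB).
split.
  move=> m Mm; rewrite /gC !phiM //; last exact: MZ.
  by rewrite rmorph0 mulr0 subr0.
rewrite /gC phiz; apply/negP => /eqP /eqP; rewrite eq_complex /= => /andP [h _].
by move: h; rewrite !mul0r mulr0 subr0 subr0 oner_eq0.
Qed.

End S.

Lemma cspan_sub (R : realType) (X : completeNormedModType R[i]) (S : set X) :
  S `<=` Defs.cspan S.
Proof. by move=> y Sy M [_ SM]; exact: SM. Qed.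

Theorem mainTheorem13 (R : realType) (X : completeNormedModType R[i])
  (E : set (set X)) (J : set (X -> X)) (L N : set X) :
  is_nest E -> is_bimodule E J -> E L -> E N ->
  nest_minus E L `<` ess_support E J N ->
  forall (f : X -> R[i]) (x : X),
    annihilator (nest_minus E N) f -> L x -> J (rank_one f x).
Proof.
move=> [Ecs Etot [E0 ET] Emeet Ejoin] [Jb J0 JL JlT JrT] EL EN lt f x hf Lx.
have Eminus K : E (nest_minus E K).
  by apply: Ejoin => F [].
have key K h w : E K -> annihilator (nest_minus E K) h -> K w ->
    nest_alg E (rank_one h w).
  move=> EK [[hl hc] h0] Kw; split.
    split.
      by move=> a u v; rewrite /rank_one hl scalerDl scalerA.
    by move=> y; apply: continuousZr_tmp; exact: hc.
  move=> M EM y My; rewrite /rank_one.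
  have [[HM _] _] := (Ecs _ EM, tt).
  have [KM|nKM] := pselect (K `<=` M).
    by apply: MZ => //; exact: KM.
  have MK : M `<` K.
    split => //; by case: (Etot _ _ EM EK) => // /nKM.
  rewrite h0 ?scale0r; first exact: M0.
  apply: cspan_sub; exists M => //.
set Lm := nest_minus E L.
have [T [JT [u [Nu nTu]]]] : exists T, J T /\ exists u, N u /\ ~ Lm (T u).
  apply: contrapT => hn; case: lt => _; apply.
  move=> y ey; apply: ey; split; first exact: Eminus.
  move=> T JT; exists [::] => _ [u Nu <-]; exists (fun _ => 0).
  rewrite big_ord0 subr0; apply: contrapT => nl; apply: hn.
  by exists T; split => //; exists u.
have [g [gd [g0 gTu]]] := @sep R X _ _ (Ecs _ (Eminus L)) nTu.
have JA : nest_alg E (rank_one g x).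
  apply: (key L) => //; split => //.
have JB : nest_alg E (rank_one f u) by exact: (key N).
have J1 := JrT _ _ JB JT.
have J2 := JlT _ _ JA J1.
have J3 := JL ((g (T u))^-1) _ _ J2 J0.
suff -> : rank_one f x = (fun y => (g (T u))^-1 *: (rank_one g x \o (T \o rank_one f u)) y + 0) by [].
have [Tl _] := Jb _ JT.
have [gl _] := gd.
have T0 : T 0 = 0.
  have h := Tl 1 0 0; rewrite !scale1r addr0 in h.
  by apply: (addrI (T 0)); rewrite addr0 -h.
have g0' : g 0 = 0.
  have h := gl 1 0 0; rewrite scale1r addr0 mul1r in h.
  by apply: (addrI (g 0)); rewrite addr0 -h.
apply: funext => y; rewrite /rank_one /= addr0.
have -> : T (f y *: u) = f y *: T u by have := Tl (f y) u 0; rewrite !addr0 T0 addr0.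
have -> : g (f y *: T u) = f y * g (T u) by have := gl (f y) (T u) 0; rewrite !addr0 g0' addr0.
by rewrite scalerA mulrCA mulVf ?mulr1.
Qed.
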